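(* Let $\mathbf p=(p_1,p_2)^T\in\mathbb{Z}^2\setminus\{\mathbf 0\}$ with $\mathbf p\notin\{(\pm1,0)^T,(0,\pm1)^T,(\pm1,\pm1)^T,(\pm1,\pm2)^T,(\pm2,\pm1)^T\}$. (Galerkin) Then there exists $\mathbf a\in\mathbb{Z}^2$ such that, with $\rho_k=\frac1{|\mathbf p|^2}-\frac1{|\mathbf a+k\mathbf p|^2}$, one has $\rho_0<0$ (i.e. $|\mathbf a|<|\mathbf p|$), $\rho_k>0$ for all $k\in\mathbb{Z}\setminus\{0\}$, and $\rho_0+\rho_2<0$ or $\rho_0+\rho_{-2}<0$; in particular, for every positive integer $N$ large enough that $\mathbf a\pm2\mathbf p\in[-N,N]^2$, $\sqrt{-\rho_1(\rho_0+\rho_2)}$ or $\sqrt{-\rho_{-1}(\rho_0+\rho_{-2})}$ is a positive real number and all $\rho_k$ with $\mathbf a+k\mathbf p\in[-N,N]^2$, $k\neq0$, are positive. (Zeitlin) If moreover $\kappa=\gcd(|p_1|,|p_2|)$ is odd, then there exist $\mathbf a\in\mathbb{Z}^2$ and infinitely many (arbitrarily large) positive integers $N$ such that, with $\mathcal D=[-N,N]^2\cap\mathbb{Z}^2$, $\widehat{\mathbf k}$ the element of $\mathcal D$ congruent to $\mathbf k$ modulo $(2N+1)\mathbb{Z}^2$, $n=|\{\widehat{\mathbf a+k\mathbf p}:k\in\mathbb{Z}\}|$ and $\rho_k=\frac1{|\mathbf p|^2}-\frac1{|\widehat{\mathbf a+k\mathbf p}|^2}$, one has $\rho_0<0$,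 $\rho_k>0$ for $k=1,\dots,n-1$, and $\rho_0+\rho_2<0$ or $\rho_0+\rho_{n-2}<0$.
   Context: These are the conditions under which the class of Fourier modes $\{\mathbf a+k\mathbf p\}$ has exactly one mode strictly inside the disc $\{|\mathbf x|<|\mathbf p|\}$ and the explicit lower bound $\sqrt{-\rho_1(\rho_0+\rho_2)}$ (or $\sqrt{-\rho_{-1}(\rho_0+\rho_{-2})}$, resp. $\sqrt{-\rho_{n-1}(\rho_0+\rho_{n-2})}$) for a real eigenvalue of the linearised class matrix is real and positive. *)

(* Defs.v *)
From HB Require Import structures.
From mathcomp Require Import all_boot all_order all_algebra.
From mathcomp Require Import finmap.
From mathcomp Require Import boolp classical_sets cardinality.
Set Implicit Arguments. Unset Strict Implicit. Unset Printing Implicit Defensive.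
Import Order.TTheory GRing.Theory Num.Theory.
Local Open Scope ring_scope.

Definition zvec := (int * int)%type.
Definition vadd (x y : zvec) : zvec := (x.1 + y.1, x.2 + y.2).
Definition vscale (k : int) (x : zvec) : zvec := (k * x.1, k * x.2).
Definition aff (a p : zvec) (k : int) : zvec := vadd a (vscale k p).
Definition nrm2 (x : zvec) : int := x.1 ^+ 2 + x.2 ^+ 2.

Definition rho (R : rcfType) (p x : zvec) : R :=
  ((nrm2 p)%:~R)^-1 - ((nrm2 x)%:~R)^-1.

Definition in_box (N : nat) (x : zvec) : Prop :=
  (- (N%:Z) <= x.1 <= N%:Z) /\ (- (N%:Z) <= x.2 <= N%:Z).

(* the representative in [-N,N] of z modulo 2N+1 *)
Definition hatc (N : nat) (z : int) : int :=
  ((z + N%:Z) %% (2 * N + 1)%:Z)%Z - N%:Z.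
Definition hat (N : nat) (x : zvec) : zvec := (hatc N x.1, hatc N x.2).

Definition orbit_size (N : nat) (a p : zvec) : nat :=
  #|` fset_set [set hat N (aff a p k) | k in [set: int]] |%fset.

Definition excluded_p (p : zvec) : bool :=
  ((`|p.1|%N, `|p.2|%N) \in [:: (0,0); (1,0); (0,1); (1,1); (1,2); (2,1)]%N).

(* Main.v *)
Require Import Defs.
From HB Require Import structures.
From mathcomp Require Import all_boot all_order all_algebra.
From mathcomp Require Import finmap.
From mathcomp Require Import boolp classical_sets cardinality.
From mathcomp Require Import zify ring lra.
Import Order.TTheory GRing.Theory Num.Theory.
Local Open Scope ring_scope.
Set Implicit Arguments. Unset Strict Implicit.
Lemma absle_sq (c P : int) : 0 <= P -> c ^+ 2 <= P ^+ 2 -> - P <= c <= P.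
Proof.
move=> hP h; apply/negPn/negP => /negP H.
have [h1|h1] : P < c \/ c < - P by lia.
- have : P * P < c * c by apply: ltr_pM => //.  rewrite -!expr2; lia.
- have : P * P < (- c) * (- c) by apply: ltr_pM => //; lia. rewrite mulrNN -!expr2; lia.
Qed.

Lemma mul_small (M c : int) : 0 < M -> - M < M * c < M -> c = 0.
Proof.
move=> hM h; apply/eqP/negPn/negP => hc.
have [h1|h1] : 1 <= c \/ c <= -1 by lia.
- have : M * 1 <= M * c by rewrite ler_pM2l. lia.
- have : M * c <= M * (-1) by rewrite ler_pM2l. lia.
Qed.

Lemma L1 (cx t X P : int) : 0 < P -> 0 <= X -> X <= P -> cx ^+ 2 + t ^+ 2 = X * P ->
  - P <= cx <= P.
Proof.
move=> hP hX0 hX lag; apply: absle_sq; first lia.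
have : X * P <= P * P by rewrite ler_pM2r.
have := sqr_ge0 t. rewrite expr2; lia.
Qed.

Lemma L2 (ca d A P : int) : 0 < A -> A < P -> ca ^+ 2 + d ^+ 2 = A * P -> - P < ca < P.
Proof.
move=> hA hAP lag.
have hP : 0 < P by lia.
have : A * P < P * P by rewrite ltr_pM2r.
have := sqr_ge0 d => h1 h2.
have h3 : ca ^+ 2 < P ^+ 2 by rewrite expr2; lia.
have h4 := @absle_sq ca P ltac:(lia) ltac:(lia).
apply/andP; split; apply/negPn/negP => h5.
+ have e : ca = - P by lia. by rewrite e sqrrN ltxx in h3.
+ have e : ca = P by lia. by rewrite e ltxx in h3.
Qed.

Lemma L4 (A P X c d : int) : 0 < A -> 2 * d < A -> - A < 2 * d -> 2 * A <= P ->
  X <= P -> P * X = P * A + 2 * c * d + c ^+ 2 -> - P < c < P.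
Proof.
move=> hA hd1 hd2 hAP hX ePX.
have hP : 0 < P by lia.
have hPX : P * X <= P * P by rewrite ler_pM2l.
apply/andP; split; rewrite ltNge; apply/negP => hc.
+ have f1 : (- c) * (2 * d) < (- c) * A by rewrite ltr_pM2l //; lia.
  have f2 : 0 <= (- c - P) * (- c + P - A) by apply: mulr_ge0; lia.
  have e1 : c ^+ 2 = (- c) * (- c) by rewrite mulrNN expr2.
  have e2 : (- c - P) * (- c + P - A) = (- c) * (- c) - (- c) * A - P * P + P * A by ring.
  have e3 : (- c) * (2 * d) = - (2 * c * d) by ring.
  lia.
+ have f1 : c * (- A) < c * (2 * d) by rewrite ltr_pM2l //; lia.
  have f2 : 0 <= (c - P) * (c + P - A) by apply: mulr_ge0; lia.
  have e1 : c ^+ 2 = c * c by rewrite expr2.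
  have e2 : (c - P) * (c + P - A) = c * c - c * A - P * P + P * A by ring.
  have e3 : c * (2 * d) = 2 * c * d by ring.
  have e4 : c * (- A) = - (c * A) by ring.
  lia.
Qed.

Lemma core (a1 a2 p1 p2 q1 q2 kap M' k r s w1 w2 : int) :
  let A := a1 ^+ 2 + a2 ^+ 2 in let P := p1 ^+ 2 + p2 ^+ 2 in
  let d := a1 * p1 + a2 * p2 in
  0 < A -> 2 * d < A -> - A < 2 * d -> 2 * A <= P ->
  p1 = kap * q1 -> p2 = kap * q2 -> 0 < kap -> r * q1 + s * q2 = 1 ->
  2 * P < kap * M' -> 0 < k < M' ->
  P < (a1 + k * p1 - kap * M' * w1) ^+ 2 + (a2 + k * p2 - kap * M' * w2) ^+ 2.
Proof.
move=> A P d.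
have eA : A = a1 ^+ 2 + a2 ^+ 2 by []. have eP : P = p1 ^+ 2 + p2 ^+ 2 by [].
have ed : d = a1 * p1 + a2 * p2 by []. clearbody A P d.
move=> hA hd1 hd2 hAP hq1 hq2 hkap hrs hM hk.
remember (kap * M') as M eqn:eM.
remember (a1 + k * p1 - M * w1) as x1 eqn:ex1'.
remember (a2 + k * p2 - M * w2) as x2 eqn:ex2'.
rewrite ltNge; apply/negP => hX.
remember (x1 ^+ 2 + x2 ^+ 2) as X eqn:eX.
have hP : 0 < P by clear -hA hAP; lia.
have hAP' : A < P by clear -hA hAP; lia.
have hX0 : 0 <= X by rewrite eX addr_ge0 // sqr_ge0.
remember (x1 * p2 - x2 * p1) as cx eqn:ecx'. remember (a1 * p2 - a2 * p1) as ca eqn:eca. remember (w1 * p2 - w2 * p1) as cw eqn:ecw.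
have lag : cx ^+ 2 + (x1 * p1 + x2 * p2) ^+ 2 = X * P by rewrite ecx' eX eP; ring.
have lag' : ca ^+ 2 + d ^+ 2 = A * P by rewrite eca ed eA eP; ring.
have hcx := L1 hP hX0 hX lag.
have hca := L2 hA hAP' lag'.
have ecx : cx - ca = - (M * cw) by rewrite ecx' eca ecw ex1' ex2'; ring.
have hM0 : 0 < M by clear -hM hP; lia.
have hcw : cw = 0.
  apply: (mul_small hM0); clear -hcx hca ecx hM; lia.
remember (w1 * p1 + w2 * p2) as s0 eqn:es0.
have ew1 : P * w1 = s0 * p1 + p2 * cw by rewrite eP es0 ecw; ring.
have ew2 : P * w2 = s0 * p2 - p1 * cw by rewrite eP es0 ecw; ring.
rewrite hcw mulr0 addr0 in ew1. rewrite hcw mulr0 subr0 in ew2.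
remember (k * P - M * s0) as c eqn:ec'.
have ex1 : P * x1 = P * a1 + c * p1.
  have -> : P * x1 = P * a1 + k * P * p1 - M * (P * w1) by rewrite ex1'; ring.
  by rewrite ew1 ec'; ring.
have ex2 : P * x2 = P * a2 + c * p2.
  have -> : P * x2 = P * a2 + k * P * p2 - M * (P * w2) by rewrite ex2'; ring.
  by rewrite ew2 ec'; ring.
have ePX : P * (P * X) = P * (P * A + 2 * c * d + c ^+ 2).
  have -> : P * (P * X) = (P * x1) ^+ 2 + (P * x2) ^+ 2 by rewrite eX; ring.
  rewrite ex1 ex2 eA ed eP; ring.
have ePX' : P * X = P * A + 2 * c * d + c ^+ 2.
  by apply: (mulfI (lt0r_neq0 hP)).
have hc := L4 hA hd1 hd2 hAP hX ePX'.
remember (k * q1 - M' * w1) as y1 eqn:ey1'. remember (k * q2 - M' * w2) as y2 eqn:ey2'.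
have exy1 : x1 - a1 = kap * y1 by rewrite ex1' ey1' eM hq1; ring.
have exy2 : x2 - a2 = kap * y2 by rewrite ex2' ey2' eM hq2; ring.
have ey1 : P * y1 = c * q1.
  apply: (mulfI (lt0r_neq0 hkap)).
  have -> : kap * (P * y1) = P * x1 - P * a1 by rewrite -[in RHS]mulrBr exy1; ring.
  by rewrite ex1 hq1; ring.
have ey2 : P * y2 = c * q2.
  apply: (mulfI (lt0r_neq0 hkap)).
  have -> : kap * (P * y2) = P * x2 - P * a2 by rewrite -[in RHS]mulrBr exy2; ring.
  by rewrite ex2 hq2; ring.
have ec : c = P * (r * y1 + s * y2).
  have -> : P * (r * y1 + s * y2) = r * (P * y1) + s * (P * y2) by ring.
  by rewrite ey1 ey2 -[c in LHS]mulr1 -hrs; ring.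
have hz : r * y1 + s * y2 = 0 by apply: (mul_small hP); rewrite -ec.
have hc0 : c = 0 by rewrite ec hz mulr0.
have hy1 : y1 = 0 by apply: (mulfI (lt0r_neq0 hP)); rewrite ey1 hc0 mulr0 mul0r.
have hy2 : y2 = 0 by apply: (mulfI (lt0r_neq0 hP)); rewrite ey2 hc0 mulr0 mul0r.
have e1 : k * q1 = M' * w1 by apply/eqP; rewrite -subr_eq0 -ey1' hy1.
have e2 : k * q2 = M' * w2 by apply/eqP; rewrite -subr_eq0 -ey2' hy2.
have ek : k = M' * (r * w1 + s * w2).
  have -> : M' * (r * w1 + s * w2) = r * (M' * w1) + s * (M' * w2) by ring.
  by rewrite -e1 -e2 -[k in LHS]mulr1 -hrs; ring.
have hM' : 0 < M' by clear -hk; lia.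
have h0 : r * w1 + s * w2 = 0 by apply: (mul_small hM'); rewrite -ek; clear -hk; lia.
by move: hk; rewrite ek h0 mulr0 ltxx.
Qed.
Lemma hatc_id N z : - (N%:Z) <= z <= N%:Z -> hatc N z = z.
Proof. move=> h; rewrite /hatc modz_small; lia. Qed.

Lemma hatc_eq N z : hatc N z = z - (2 * N + 1)%:Z * ((z + N%:Z) %/ (2 * N + 1)%:Z)%Z.
Proof. rewrite /hatc; have := divz_eq (z + N%:Z) (2 * N + 1)%:Z; lia. Qed.

Lemma hatc_per N z t : hatc N (z + (2 * N + 1)%:Z * t) = hatc N z.
Proof.
rewrite /hatc; congr (_ - _).
rewrite (_ : z + (2 * N + 1)%:Z * t + N%:Z = t * (2 * N + 1)%:Z + (z + N%:Z)); last by ring.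
exact: modzMDl.
Qed.

Lemma hat_aff N a p k : hat N (aff a p k) = (hatc N (a.1 + k * p.1), hatc N (a.2 + k * p.2)).
Proof. by []. Qed.
Section CI. Local Open Scope classical_set_scope.
Lemma card_img_le (f : int -> zvec) (m : nat) :
  (forall k, exists2 i : nat, (i < m)%N & f k = f i%:Z) ->
  (#|` fset_set [set f k | k in [set: int]]| <= m)%N.
Proof.
move=> H.
have E : [set f k | k in [set: int]] =
    [set` [fset x in map (fun i : nat => f i%:Z) (iota 0 m)]%fset].
  apply/seteqP; split => x /=.
  - case=> k _ <-; have [i hi ->] := H k.
    rewrite inE; apply/mapP; exists i => //; by rewrite mem_iota.
  - rewrite inE => /mapP [i _ ->]; by exists i%:Z.
rewrite E set_fsetK card_fseq.
by rewrite (leq_trans (size_undup _)) // size_map size_iota.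
Qed.
End CI.
Definition dot (a p : zvec) : int := a.1 * p.1 + a.2 * p.2.
Definition goodb (a p : zvec) : bool :=
  [&& 0 < nrm2 a, 2 * dot a p < nrm2 a, - nrm2 a < 2 * dot a p & 2 * nrm2 a <= nrm2 p].
Definition cands : seq zvec :=
  [seq ((i%:Z - 3), (j%:Z - 3)) | i <- iota 0 7, j <- iota 0 7].
Lemma sqge (y c : int) : 0 <= c -> c <= y \/ y <= - c -> c * c <= y ^+ 2.
Proof.
move=> hc [h|h]; first by rewrite expr2; apply: ler_pM.
by rewrite -sqrrN expr2; apply: ler_pM => //; lia.
Qed.
Lemma sqle1 (t : int) : -1 <= t <= 1 -> t ^+ 2 <= 1.
Proof. move=> h; have [->|[->|->]] : t = -1 \/ t = 0 \/ t = 1 by lia. all: by []. Qed.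
Lemma quad (h1 h2 t1 t2 : int): -1<=t1<=1 -> -1<=t2<=1 -> (3 <= h1 \/ h1 <= -3) ->
  2*(h1*t1+h2*t2) < h1^+2+h2^+2.
Proof.
move=> ht1 ht2 hh.
have e : h1^+2+h2^+2 - 2*(h1*t1+h2*t2) = (h1-t1)^+2 + (h2-t2)^+2 - t1^+2 - t2^+2 by ring.
have a1 : 2*2 <= (h1-t1)^+2 by apply: sqge => //; lia.
have a2 : 0 <= (h2-t2)^+2 by apply: sqr_ge0.
have a3 := sqle1 ht1. have a4 := sqle1 ht2.
lia.
Qed.

Lemma small_all : all (fun i => all (fun j =>
   excluded_p ((i%:Z-5), (j%:Z-5)) || has (fun a => goodb a ((i%:Z-5),(j%:Z-5))) cands)
   (iota 0 11)) (iota 0 11).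
Proof. by vm_compute. Qed.
Lemma small_case (p : zvec) : ~~ excluded_p p -> -5 <= p.1 <= 5 -> -5 <= p.2 <= 5 ->
  exists a, goodb a p.
Proof.
case: p => p1 p2 hp h1 h2.
have hi : (absz (p1 + 5) \in iota 0 11) by rewrite mem_iota; simpl in h1; lia.
have hj : (absz (p2 + 5) \in iota 0 11) by rewrite mem_iota; simpl in h2; lia.
have := allP small_all _ hi => /allP /(_ _ hj).
have -> : ((absz (p1 + 5))%:Z - 5) = p1 by simpl in h1; lia.
have -> : ((absz (p2 + 5))%:Z - 5) = p2 by simpl in h2; lia.
rewrite (negbTE hp) orFb => /hasP [a _ ha]; by exists a.
Qed.
Lemma halfdec (x : int) : exists h e : int, x = 2*h + e /\ -1 <= e <= 1 /\ 0 <= h*e.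
Proof.
have hx := divz_eq x 2. have hr : 0 <= (x %% 2)%Z < 2 by lia.
move: hx hr. 
generalize (x %/ 2)%Z (x %% 2)%Z => q r hx hr.
have [hr0|hr1] : r = 0 \/ r = 1 by lia.
  exists q, 0; rewrite mulr0; split; lia.
case: (lerP 0 x) => hx0.
  exists q, 1; rewrite mulr1; split; lia.
exists (q + 1), (-1); rewrite mulrN1; split; lia.
Qed.

Lemma quad2 (h1 h2 t1 t2 : int): -1<=t1<=1 -> -1<=t2<=1 ->
  (3 <= h1 \/ h1 <= -3 \/ 3 <= h2 \/ h2 <= -3) ->
  2*(h1*t1+h2*t2) < h1^+2+h2^+2.
Proof.
move=> ht1 ht2 [h|[h|h]].
- by apply: quad => //; left.
- by apply: quad => //; right.
- by rewrite addrC [h1^+2 + _]addrC; apply: quad.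
Qed.

Lemma large_case (p : zvec) : (6 <= p.1 \/ p.1 <= -6 \/ 6 <= p.2 \/ p.2 <= -6) ->
  exists a, goodb a p.
Proof.
case: p => p1 p2 /= hb.
have [h1 [e1 [E1 [B1 H1]]]] := halfdec p1.
have [h2 [e2 [E2 [B2 H2]]]] := halfdec p2.
have hh : 3 <= h1 \/ h1 <= -3 \/ 3 <= h2 \/ h2 <= -3 by clear -hb E1 E2 B1 B2; lia.
clear hb.
exists (-h2, h1); rewrite /goodb /nrm2 /dot /=.
have eA : (- h2) ^+ 2 + h1 ^+ 2 = h1^+2 + h2^+2 by rewrite sqrrN addrC.
have ed : - h2 * p1 + h1 * p2 = h1 * e2 + h2 * (- e1) by rewrite E1 E2; ring.
rewrite eA ed; apply/and4P; split.
- have := @quad2 h1 h2 0 0 ltac:(by []) ltac:(by []) hh => H. rewrite !mulr0 in H.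
  clear -H; lia.
- apply: (@quad2 _ _ _ _ _ _ hh); clear -B1 B2; lia.
- have := @quad2 h1 h2 (- e2) e1 ltac:(clear -B2; lia) ltac:(clear -B1;lia) hh.
  have -> : h1 * - e2 + h2 * e1 = - (h1 * e2 + h2 * - e1) by ring.
  clear; lia.
- have e : p1 ^+ 2 + p2 ^+ 2 - 2 * (h1 ^+ 2 + h2 ^+ 2) =
     2 * h1^+2 + 4 * (h1 * e1) + e1^+2 + 2 * h2^+2 + 4 * (h2 * e2) + e2^+2
    by rewrite E1 E2; ring.
  have := sqr_ge0 h1; have := sqr_ge0 h2; have := sqr_ge0 e1; have := sqr_ge0 e2.
  clear -e H1 H2; lia.
Qed.

Lemma nrm2_aff a p k : nrm2 (aff a p k) = nrm2 a + 2 * k * dot a p + k ^+ 2 * nrm2 p.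
Proof. rewrite /nrm2 /aff /vadd /vscale /dot /=; ring. Qed.

Lemma keyk (A d P k : int) : 0 < A -> 2 * d < A -> - A < 2 * d -> 2 * A <= P -> 1 <= k ->
  P < A + 2 * k * d + k ^+ 2 * P.
Proof.
move=> hA h1 h2 hP hk.
have f1 : k * (- A) < k * (2 * d) by rewrite ltr_pM2l //; lia.
have f2 : (k^+2 - 1) * (2 * A) <= (k^+2 - 1) * P.
  by rewrite ler_wpM2l // subr_ge0 exprn_ege1 //; lia.
have f3 : 0 <= ((2 * k + 1) * (k - 1)) * A by rewrite !mulr_ge0 //; lia.
have e1 : A + 2 * k * d + k ^+ 2 * P - P = A + k * (2 * d) + (k^+2 - 1) * P by ring.
have e3 : ((2 * k + 1) * (k - 1)) * A = A + k * (- A) + (k^+2 - 1) * (2 * A) by ring.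
lia.
Qed.

Lemma gal_pos a p k : goodb a p -> k != 0 -> nrm2 p < nrm2 (aff a p k).
Proof.
case/and4P=> hA h1 h2 hP hk; rewrite nrm2_aff.
case: (lerP 1 k) => hk1; first exact: keyk.
have hk2 : 1 <= - k by lia.
have := @keyk _ (- dot a p) _ _ hA ltac:(lia) ltac:(lia) hP hk2.
have -> : 2 * - k * - dot a p = 2 * k * dot a p by ring.
by rewrite sqrrN.
Qed.

Lemma rho_pos (R : rcfType) p x : 0 < nrm2 p -> (nrm2 p < nrm2 x \/ nrm2 x = 0) ->
  0 < rho R p x.
Proof.
move=> hp [h|h]; rewrite /rho subr_gt0.
- rewrite ltf_pV2 ?ltr_int // posrE ltr0z //; lia.
- by rewrite h invr0 invr_gt0 ltr0z.
Qed.

Lemma rho_neg (R : rcfType) p x : 0 < nrm2 x -> nrm2 x < nrm2 p -> rho R p x < 0.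
Proof.
move=> hx h; rewrite /rho subr_lt0.
rewrite ltf_pV2 ?ltr_int // posrE ltr0z //; lia.
Qed.

Lemma rho_sum (R : rcfType) p a x : 0 < nrm2 a -> 2 * nrm2 a <= nrm2 p -> 0 < nrm2 x ->
  rho R p a + rho R p x < 0.
Proof.
move=> ha hap hx; rewrite /rho.
have hp : 0 < nrm2 p by lia.
set A := (nrm2 a)%:~R : R; set P := (nrm2 p)%:~R : R; set X := (nrm2 x)%:~R : R.
have hA : 0 < A by rewrite ltr0z.
have hP : 0 < P by rewrite ltr0z.
have hX : 0 < X by rewrite ltr0z.
have hAP : 2 * A <= P by rewrite /A /P -[2]/((2:int)%:~R) -intrM ler_int.
have e : A^-1 - 2 * P^-1 = (P - 2 * A) / (A * P).
  by field; apply/andP; split; rewrite gt_eqF.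
have : 0 <= A^-1 - 2 * P^-1 by rewrite e divr_ge0 // ?subr_ge0 // mulr_ge0 // ltW.
have : 0 < X^-1 by rewrite invr_gt0.
lra.
Qed.

Lemma exists_good (p : zvec) : ~~ excluded_p p -> exists a, goodb a p.
Proof.
move=> hp.
case: (boolP ((-5 <= p.1 <= 5) && (-5 <= p.2 <= 5))) => [/andP [h1 h2]|h].
  exact: small_case.
apply: large_case; move: h; case: p {hp} => p1 p2 /= h; lia.
Qed.

Unset Implicit Arguments.

Theorem lemma7 (R : rcfType) (p : zvec) (hp : ~~ excluded_p p) :
  (* Galerkin *)
  (exists a : zvec,
     rho R p (aff a p 0) < 0 /\
     (forall k : int, k != 0 -> 0 < rho R p (aff a p k)) /\
     (rho R p (aff a p 0) + rho R p (aff a p 2) < 0 \/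
      rho R p (aff a p 0) + rho R p (aff a p (-2)) < 0) /\
     (forall N : nat, (0 < N)%N ->
        in_box N (aff a p 2) -> in_box N (aff a p (-2)) ->
        (0 < Num.sqrt (- (rho R p (aff a p 1) *
                          (rho R p (aff a p 0) + rho R p (aff a p 2)))) \/
         0 < Num.sqrt (- (rho R p (aff a p (-1)) *
                          (rho R p (aff a p 0) + rho R p (aff a p (-2)))))) /\
        (forall k : int, k != 0 -> in_box N (aff a p k) ->
           0 < rho R p (aff a p k)))) /\
  (* Zeitlin *)
  (odd (gcdn `|p.1| `|p.2|) ->
   exists a : zvec, forall M : nat, exists N : nat,
     (M <= N)%N /\ (0 < N)%N /\
     let n := orbit_size N a p in
     let rhoZ (k : int) := rho R p (hat N (aff a p k)) in
     rhoZ 0 < 0 /\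
     (forall k : nat, (1 <= k)%N -> (k <= n - 1)%N -> 0 < rhoZ k%:Z) /\
     (rhoZ 0 + rhoZ 2 < 0 \/ rhoZ 0 + rhoZ (n%:Z - 2) < 0)).
Proof.
have [a ha] := exists_good hp.
have ha' := ha; case/and4P: ha' => hA hd1 hd2 hAP.
have hP : 0 < nrm2 p by lia.
have hA0 : nrm2 (aff a p 0) = nrm2 a by rewrite nrm2_aff; ring.
have hpos : forall k, k != 0 -> 0 < rho R p (aff a p k).
  by move=> k hk; apply: rho_pos => //; left; apply: gal_pos.
have h0 : rho R p (aff a p 0) < 0 by apply: rho_neg; rewrite hA0 //; lia.
have hs : rho R p (aff a p 0) + rho R p (aff a p 2) < 0.
  have h2 := @gal_pos a p 2 ha isT.
  by apply: rho_sum; rewrite ?hA0 //; lia.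
split.
  exists a; split; [done|split; [done|split; [by left|]]].
  move=> N _ _ _; split; last by move=> k hk _; exact: hpos.
  left; rewrite sqrtr_gt0 -mulrN; apply: mulr_gt0; [exact: hpos | by rewrite oppr_gt0].
move=> hodd; exists a => Mb.
set kn := gcdn `|p.1| `|p.2| in hodd *.
have hkn : kn = (2 * kn./2 + 1)%N.
  by rewrite -[kn in LHS]odd_double_half hodd -mul2n addnC.
set c := kn./2 in hkn.
set L := (Mb + absz (nrm2 p) + absz a.1 + absz a.2 + 2 * absz p.1 + 2 * absz p.2)%N.
have hL1 : (1 <= L)%N by rewrite /L; lia.
set Mp := (2 * L + 1)%N.
exists (kn * L + c)%N.
set N := (kn * L + c)%N.
have hkn0 : (0 < kn)%N by rewrite hkn addn1.
have hLN : (L <= N)%N by rewrite /N (leq_trans (leq_pmull L hkn0)) // leq_addr.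
have eMn : (2 * N + 1 = kn * Mp)%N by rewrite /N /Mp hkn; nia.
set kap : int := kn%:Z.
have hkap : 0 < kap by rewrite /kap ltz_nat.
have eMz : (2 * N + 1)%:Z = kap * Mp%:Z by rewrite eMn PoszM.
have egcd : gcdz p.1 p.2 = kap by [].
have [q1 hq1] : exists q1, p.1 = kap * q1.
  exists (p.1 %/ kap)%Z; rewrite mulrC divzK // -egcd; exact: dvdz_gcdl.
have [q2 hq2] : exists q2, p.2 = kap * q2.
  exists (p.2 %/ kap)%Z; rewrite mulrC divzK // -egcd; exact: dvdz_gcdr.
have [u [v huv]] := Bezoutz p.1 p.2.
have hrs : u * q1 + v * q2 = 1.
  apply: (mulfI (lt0r_neq0 hkap)); rewrite mulr1.
  have -> : kap * (u * q1 + v * q2) = u * (kap * q1) + v * (kap * q2) by ring.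
  by rewrite -hq1 -hq2 huv.
split; first by clear -hLN; lia.
split; first by clear -hLN hL1; lia.
move=> n rhoZ.
have hbox : forall z : int, (`|z| <= L)%N -> hatc N z = z.
  by move=> z hz; apply: hatc_id; clear -hz hLN; lia.
have hr0 : rhoZ 0 = rho R p a.
  rewrite /rhoZ hat_aff !mul0r !addr0 !hbox //; last 2 first.
  - by rewrite /L; lia.
  - by rewrite /L; lia.
have hr2 : rhoZ 2 = rho R p (aff a p 2).
  rewrite /rhoZ hat_aff !hbox //.
  - rewrite /L; clear; lia.
  - rewrite /L; clear; lia.
have hn : (n <= Mp)%N.
  apply: card_img_le => k.
  exists (absz (k %% Mp%:Z)%Z).
    have : (0 <= (k %% Mp%:Z)%Z < Mp%:Z) by clear; lia.
    clear; lia.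
  set i := absz (k %% Mp%:Z)%Z.
  set t := (k %/ Mp%:Z)%Z.
  have ek : k = i%:Z + Mp%:Z * t.
    rewrite /i /t; have := divz_eq k Mp%:Z; have : 0 <= (k %% Mp%:Z)%Z by clear; lia.
    clear; lia.
  rewrite !hat_aff ek.
  have e1 : a.1 + (i%:Z + Mp%:Z * t) * p.1 = a.1 + i%:Z * p.1 + (2 * N + 1)%:Z * (t * q1).
    by rewrite eMz hq1; ring.
  have e2 : a.2 + (i%:Z + Mp%:Z * t) * p.2 = a.2 + i%:Z * p.2 + (2 * N + 1)%:Z * (t * q2).
    by rewrite eMz hq2; ring.
  by rewrite e1 e2 !hatc_per.
split; first by rewrite hr0; apply: rho_neg => //; lia.
split; last by left; rewrite hr0 hr2; apply: rho_sum => //; have := @gal_pos a p 2 ha isT; lia.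
move=> k hk1 hk2.
have hkM : (k < Mp)%N by clear -hk1 hk2 hn; lia.
rewrite /rhoZ hat_aff !hatc_eq eMz.
apply: rho_pos => //; left.
have := @core a.1 a.2 p.1 p.2 q1 q2 kap Mp%:Z k%:Z u v
  ((a.1 + k%:Z * p.1 + N%:Z) %/ (kap * Mp%:Z))%Z
  ((a.2 + k%:Z * p.2 + N%:Z) %/ (kap * Mp%:Z))%Z hA hd1 hd2 hAP hq1 hq2 hkap hrs.
rewrite /nrm2 /=; apply.
- have hPL : nrm2 p <= L%:Z by rewrite /L; clear; lia.
  have eP : nrm2 p = p.1 ^+ 2 + p.2 ^+ 2 by [].
  rewrite -eMz; clear -hPL eP hLN hP; lia.
- clear -hk1 hkM; lia.
Qed.
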